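(* For $G_w$-almost every $w\in\Theta_w$, the distribution $K_w$ has a continuous CDF (is atomless). Consequently the set $\Theta':=\{(w,B)\in\Theta: K_w \text{ has a continuous CDF}\}$ satisfies $G(\Theta')=1$.
   Context: Setting. Fix an integer $d\ge 2$ and constants $U>0$, $B_{\min}>0$. Buyer types are $(w,B)\in\Theta:=(0,U)^d\times(B_{\min},U)$; $\Theta_w:=(0,U)^d$. Item types are $\alpha\in A\subset\mathbb{R}^d_{+}$ (strictly positive orthant); all sets carry the Lebesgue $\sigma$-algebra. $F$ is a probability distribution on $A$ with a density and $G$ a probability distribution on $\Theta$ with a density; $G_w$ is the marginal distribution of $w$ under $G$. Reserve prices: measurable $r:A\to(0,\infty)$. Let $K$ be the distribution of $\alpha/r(\alpha)$ when $\alpha\sim F$, and for $w\in\Theta_w$ let $K_w$ be the distribution of $w^T\gamma$ when $\gamma\sim K$ (i.e. the distribution of $w^T\alpha/r(\alpha)$ under $\alpha\sim F$). *)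

(* Defs.v *)
(* R^d is modelled as d.-tuple R with the product
   (Borel) sigma-algebra provided by mathcomp-analysis. *)
From mathcomp Require Import all_boot all_order all_algebra.
From mathcomp Require Import all_classical all_reals all_analysis.
Import Order.TTheory GRing.Theory Num.Theory.
Import numFieldNormedType.Exports.
Set Implicit Arguments. Unset Strict Implicit. Unset Printing Implicit Defensive.
Local Open Scope classical_set_scope.
Local Open Scope ring_scope.

Section Defs.
Variable R : realType.

(* Lebesgue integral over R^n of a function with values in \bar R, written as
   the n-fold iterated one-dimensional Lebesgue integral (by Tonelli this is
   the integral against n-dimensional Lebesgue measure for non-negative
   measurable integrands, the only case used below). *)
Fixpoint lebesgue_int_tuple (n : nat) : (n.-tuple R -> \bar R) -> \bar R :=
  match n return (n.-tuple R -> \bar R) -> \bar R with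
  | 0 => fun g => g [tuple]
  | n'.+1 => fun g =>
      (\int[@lebesgue_measure R]_x
          lebesgue_int_tuple (fun t => g [tuple of x :: t]))%E
  end.

Definition dotv (d : nat) (w a : d.-tuple R) : R :=
  \sum_(i < d) tnth w i * tnth a i.

Definition has_density_tuple (d : nat) (P : probability (d.-tuple R) R) : Prop :=
  exists f : d.-tuple R -> R,
    measurable_fun setT f /\ (forall x, 0 <= f x) /\
    forall S, measurable S ->
      P S = lebesgue_int_tuple (fun x => ((\1_S x : R) * f x)%:E).

Definition has_density_pair (d : nat) (P : probability (d.-tuple R * R)%type R) : Prop :=
  exists g : (d.-tuple R * R)%type -> R,
    measurable_fun setT g /\ (forall x, 0 <= g x) /\
    forall S, measurable S ->
      P S = (\int[@lebesgue_measure R]_b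
               lebesgue_int_tuple (fun w => ((\1_S (w, b) : R) * g (w, b))%:E))%E.

(* CDF of K_w: the law of  w^T alpha / r(alpha)  when alpha ~ F, F concentrated on A. *)
Definition Kw_cdf (d : nat) (F : probability (d.-tuple R) R) (A : set (d.-tuple R))
    (r : d.-tuple R -> R) (w : d.-tuple R) (t : R) : R :=
  fine (F (A `&` [set a | dotv w a / r a <= t])).

Definition Theta (d : nat) (U Bmin : R) : set (d.-tuple R * R)%type :=
  [set p | (forall i, 0 < tnth p.1 i < U) /\ Bmin < p.2 < U].

Definition Theta' (d : nat) (U Bmin : R) (F : probability (d.-tuple R) R)
    (A : set (d.-tuple R)) (r : d.-tuple R -> R) : set (d.-tuple R * R)%type :=
  [set p | Theta U Bmin p /\ continuous (Kw_cdf F A r p.1)].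

End Defs.

(* Main.v *)
Require Import Defs.
From mathcomp Require Import all_boot all_order all_algebra.
From mathcomp Require Import all_classical all_reals all_analysis.
From mathcomp Require Import lra ring measurable_realfun.
Import Order.TTheory GRing.Theory Num.Theory.
Import numFieldNormedType.Exports.
Set Implicit Arguments. Unset Strict Implicit. Unset Printing Implicit Defensive.
Local Open Scope classical_set_scope.
Local Open Scope ring_scope.

Definition upd_last (R : realType) n (t : n.+1.-tuple R) (y : R) : n.+1.-tuple R :=
  [tuple if i == ord_max then y else tnth t i | i < n.+1].

Lemma tnth_upd_last (R : realType) n (t : n.+1.-tuple R) y i :
  tnth (upd_last t y) i = if i == ord_max then y else tnth t i.
Proof. by rewrite tnth_mktuple. Qed.

Lemma measurable_upd_last (R : realType) n (t : n.+1.-tuple R) :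
  measurable_fun setT (upd_last t).
Proof.
apply/measurable_fun_tnthP => i.
rewrite /comp; under eq_fun do rewrite tnth_upd_last.
by case: (i == ord_max); [exact: measurable_id|exact: measurable_cst].
Qed.

Lemma LIT0 (R : realType) n (h : n.+1.-tuple R -> \bar R) :
  (forall t, (\int[@lebesgue_measure R]_y h (upd_last t y) = 0)%E) ->
  lebesgue_int_tuple h = 0%E.
Proof.
elim: n h => [|n IH] h H.
  rewrite /=.
  have := H [tuple 0]; rewrite /= => <-.
  apply: eq_integral => y _; congr h; apply: eq_from_tnth => i.
  by rewrite tnth_upd_last (ord1 i) /= tnth0.
rewrite /=.
rewrite (eq_integral (fun _ => 0%E)) ?integral0// => x _.
move: (IH (fun t => h [tuple of x :: t])); rewrite /= => ->// t.
have := H [tuple of x :: t] => <-.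
apply: eq_integral => y _; congr h; apply: eq_from_tnth => i.
rewrite tnth_upd_last.
case: (unliftP ord0 i) => [j ->|->].
  rewrite !tnthS tnth_upd_last.
  by rewrite -(inj_eq val_inj) -[lift _ _ == _](inj_eq val_inj) /= /bump leq0n add1n eqSS.
by rewrite !(tnth_nth 0) /=.
Qed.

Lemma measurable_dotv (R : realType) dd (X : measurableType dd) n
  (f g : X -> n.-tuple R) :
  measurable_fun setT f -> measurable_fun setT g ->
  measurable_fun setT (fun x => dotv (f x) (g x)).
Proof.
move=> mf mg; rewrite /dotv; apply: measurable_sum => i.
by apply: measurable_realfun.measurable_funM;
  [exact: (measurableT_comp (measurable_tnth i) mf)|exact: (measurableT_comp (measurable_tnth i) mg)].
Qed.

Lemma dotv_upd (R : realType) n (t a : n.+1.-tuple R) y :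
  dotv (upd_last t y) a =
  \sum_(i < n) tnth t (widen_ord (leqnSn n) i) * tnth a (widen_ord (leqnSn n) i)
  + y * tnth a ord_max.
Proof.
rewrite /dotv big_ord_recr /= tnth_upd_last eqxx; congr (_ + _).
apply: eq_bigr => i _; rewrite tnth_upd_last.
have -> // : (widen_ord (leqnSn n) i == ord_max) = false.
by rewrite -(inj_eq val_inj) /= ltn_eqF.
Qed.

Lemma archi_inv (R : realType) (x : R) : 0 < x -> exists k : nat, k.+1%:R^-1 < x.
Proof.
move=> x0; have [N _ HN] := near_infty_natSinv_lt (PosNum x0).
by exists N; apply: HN => /=.
Qed.

Section Main.
Variables (R : realType) (n : nat).
Local Notation T := (n.+1.-tuple R).
Variables (A : set T) (F : probability T R) (r : T -> R).
Hypotheses (mA : measurable A) (Apos : forall a, A a -> forall i, 0 < tnth a i)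
  (mr : measurable_fun A r) (rpos : forall a, A a -> 0 < r a).

Definition E (w : T) (tau : R) : set T := A `&` [set a | dotv w a = tau * r a].
Definition Lw (w : T) (t : R) : set T := A `&` [set a | dotv w a <= t * r a].

Lemma mdotr w tau : measurable_fun A (fun a => dotv w a - tau * r a).
Proof.
apply: measurable_realfun.measurable_funB.
  apply: (measurable_funS measurableT) => //.
  exact: (measurable_dotv (measurable_cst w) (@measurable_id _ _ setT)).
exact: measurable_realfun.measurable_funM.
Qed.

Lemma mE w tau : measurable (E w tau).
Proof.
have := mdotr w tau mA (measurable_set1 0).
congr measurable; apply/seteqP; split=> a [Aa /=].
  by move=> H; split => //; apply/eqP; rewrite -subr_eq0; apply/eqP.
by move=> ->; rewrite /= subrr.
Qed.

Lemma mLw w t : measurable (Lw w t).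
Proof.
have := mdotr w t mA (measurable_itv `]-oo, 0]).
congr measurable; apply/seteqP; split=> a [Aa /=].
  by rewrite /= in_itv /= subr_le0.
by move=> H; rewrite /= in_itv /= subr_le0.
Qed.

Lemma Kw_cdfE w : Kw_cdf F A r w = fun t => fine (F (Lw w t)).
Proof.
apply: funext => t; rewrite /Kw_cdf /Lw; congr (fine (F _)).
apply/seteqP; split=> a [Aa /= H]; split => //=.
  by rewrite -ler_pdivrMr ?rpos.
by rewrite ler_pdivrMr ?rpos.
Qed.

Lemma Lw_mono w s t : s <= t -> Lw w s `<=` Lw w t.
Proof.
move=> st a [Aa /= H]; split => //=; apply: (le_trans H).
by rewrite ler_wpM2r // ltW // rpos.
Qed.

Lemma Lw_bigcap w t : \bigcap_k Lw w (t + k.+1%:R^-1) = Lw w t.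
Proof.
apply/seteqP; split; last first.
  by move=> a Ha k _; apply: (Lw_mono _ Ha); rewrite lerDl.
move=> a H; have [Aa _] := H 0%N I; split => //=.
rewrite leNgt; apply/negP => Hlt.
have ra := rpos Aa.
have [k Hk] : exists k : nat, k.+1%:R^-1 < (dotv w a - t * r a) / r a.
  by apply: archi_inv; rewrite divr_gt0 // subr_gt0.
have [_ /= Hk'] := H k I.
move: Hk; rewrite ltr_pdivlMr // => Hk.
move: Hk'; rewrite mulrDl; move: (k.+1%:R^-1 * r a) Hk => e Hk Hk'; lra.
Qed.

Lemma Lw_bigcup w t : \bigcup_k Lw w (t - k.+1%:R^-1) =
  A `&` [set a | dotv w a < t * r a].
Proof.
apply/seteqP; split.
  move=> a [k _ [Aa /= H]]; split => //=; apply: (le_lt_trans H).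
  by rewrite ltr_pM2r ?rpos // ltrBlDr ltrDl.
move=> a [Aa /= H].
have ra := rpos Aa.
have [k Hk] : exists k : nat, k.+1%:R^-1 < (t * r a - dotv w a) / r a.
  by apply: archi_inv; rewrite divr_gt0 // subr_gt0.
exists k => //; split => //=.
rewrite mulrBl; move: Hk; rewrite ltr_pdivlMr //; move: (k.+1%:R^-1 * r a) => e; lra.
Qed.

Lemma Lw_split w t : Lw w t = (A `&` [set a | dotv w a < t * r a]) `|` E w t.
Proof.
apply/seteqP; split.
  move=> a [Aa /= H]; move: H; rewrite le_eqVlt => /orP[/eqP H|H].
    by right.
  by left.
move=> a [[Aa /= H]|[Aa /= H]]; split => //=; first exact: ltW.
by rewrite H.
Qed.

Lemma invS_le (i j : nat) : (i <= j)%N -> j.+1%:R^-1 <= i.+1%:R^-1 :> R.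
Proof. by move=> ij; rewrite lef_pV2 ?posrE ?ltr0Sn // ler_nat ltnS. Qed.

Lemma invS_gt0 (i : nat) : 0 < i.+1%:R^-1 :> R.
Proof. by rewrite invr_gt0 ltr0Sn. Qed.

Lemma cont_noatom w : (forall tau, F (E w tau) = 0%E) ->
  continuous (Kw_cdf F A r w).
Proof.
move=> H0; rewrite Kw_cdfE.
set c := fun t => fine (F (Lw w t)).
have FL t : F (Lw w t) = (c t)%:E.
  by rewrite /c fineK //; apply: fin_num_measure; exact: mLw.
have cmono s t : s <= t -> c s <= c t.
  move=> st; rewrite /c; apply: fine_le; try (apply: fin_num_measure; exact: mLw).
  by apply: le_measure; rewrite ?inE; [exact: mLw|exact: mLw|exact: Lw_mono].
have right t : (fun k => c (t + k.+1%:R^-1)) @ \oo --> c t.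
  have Hc : (F \o (fun k => Lw w (t + k.+1%:R^-1))) @ \oo --> F (Lw w t).
    rewrite -[X in _ --> F X](Lw_bigcap w t); apply: nonincreasing_cvg_mu.
    - by apply: (le_lt_trans (probability_le1 _ _)); [exact: mLw|exact: ltry].
    - by move=> k; exact: mLw.
    - by rewrite Lw_bigcap; exact: mLw.
    - move=> i j ij; apply/subsetPset; apply: Lw_mono.
      by rewrite lerD2l invS_le.
  by move: Hc; rewrite FL => /fine_cvgP [_ Hc].
have left t : (fun k => c (t - k.+1%:R^-1)) @ \oo --> c t.
  have mB : measurable (\bigcup_k Lw w (t - k.+1%:R^-1)).
    by apply: bigcupT_measurable => k; exact: mLw.
  have Hc : (F \o (fun k => Lw w (t - k.+1%:R^-1))) @ \oo -->
            F (\bigcup_k Lw w (t - k.+1%:R^-1)).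
    apply: nondecreasing_cvg_mu => //.
    - by move=> k; exact: mLw.
    - move=> i j ij; apply/subsetPset; apply: Lw_mono.
      by rewrite lerD2l lerN2 invS_le.
  have E1 : F (\bigcup_k Lw w (t - k.+1%:R^-1)) = (c t)%:E.
    rewrite -FL Lw_bigcup [in RHS]Lw_split measureU0 //; try exact: mE.
    by rewrite -Lw_bigcup.
    exact: H0.
  by move: Hc; rewrite E1 => /fine_cvgP [_ Hc].
move=> x; apply/cvgrPdist_lt => e e0.
have [k1 Hk1] : exists k : nat, c (x + k.+1%:R^-1) - c x < e.
  have /cvgrPdist_lt /(_ e e0) [N _ HN] := right x.
  exists N; have := HN N (leqnn N); rewrite /= ltr_distlC => /andP[_].
  move: (c (x + _)) => u; lra.
have [k2 Hk2] : exists k : nat, c x - c (x - k.+1%:R^-1) < e.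
  have /cvgrPdist_lt /(_ e e0) [N _ HN] := left x.
  exists N; have := HN N (leqnn N); rewrite /= ltr_distlC => /andP[+ _].
  move: (c (x - _)) => u; lra.
apply/nbhs_ballP; exists (k1 + k2).+1%:R^-1; first exact: invS_gt0.
move=> y; rewrite /ball /= ltr_distlC => /andP[Hy1 Hy2].
have hy1 : y <= x + k1.+1%:R^-1.
  apply: ltW; apply: (lt_le_trans Hy2); rewrite lerD2l invS_le //.
  by rewrite leq_addr.
have hy2 : x - k2.+1%:R^-1 <= y.
  apply: ltW; apply: le_lt_trans Hy1; rewrite lerD2l lerN2 invS_le //.
  by rewrite leq_addl.
have c1 := cmono _ _ hy1; have c2 := cmono _ _ hy2.
have c3 : c x <= c (x + k1.+1%:R^-1) by apply: cmono; rewrite lerDl ltW // invS_gt0.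
have c4 : c (x - k2.+1%:R^-1) <= c x by apply: cmono; rewrite lerBlDr lerDl ltW // invS_gt0.
rewrite ltr_distlC; move: Hk1 Hk2 c1 c2 c3 c4.
move: (c (x + _)) (c (x - _)) (c x) (c y) => u v p q; lra.
Qed.

Lemma int_zero_off (h : R -> R) (C : set R) : measurable C ->
  lebesgue_measure C = 0%E -> measurable_fun setT h ->
  (forall y, ~ C y -> h y = 0) ->
  (\int[@lebesgue_measure R]_y (h y)%:E = 0)%E.
Proof.
move=> mC C0 mh hC.
rewrite (ae_eq_integral (cst 0%E)) ?integral0 //.
- by apply/measurable_realfun.measurable_EFinP.
- exists C; split => // y /= Hy; apply: contrapT => Hy'; apply: Hy => _.
  by rewrite hC.
Qed.

Definition Lp (t a : T) : R :=
  \sum_(i < n) tnth t (widen_ord (leqnSn n) i) * tnth a (widen_ord (leqnSn n) i).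

Lemma dotv_updL t a y : dotv (upd_last t y) a = Lp t a + y * tnth a ord_max.
Proof. exact: dotv_upd. Qed.

Lemma Lp_upd t t' y : Lp t (upd_last t' y) = Lp t t'.
Proof.
apply: eq_bigr => i _; rewrite tnth_upd_last.
have -> // : (widen_ord (leqnSn n) i == ord_max) = false.
by rewrite -(inj_eq val_inj) /= ltn_eqF.
Qed.

Lemma mLp t : measurable_fun setT (Lp t).
Proof.
rewrite /Lp; apply: measurable_sum => i.
apply: measurable_realfun.measurable_funM => //.
exact: measurable_tnth.
Qed.

Definition Gam t k : set T := [set a | tnth a ord_max = k * Lp t a].

Lemma mGam t k : measurable (Gam t k).
Proof.
have mh : measurable_fun setT (fun a : T => tnth a ord_max - k * Lp t a).
  apply: measurable_realfun.measurable_funB; first exact: measurable_tnth.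
  exact: measurable_realfun.measurable_funM (mLp t).
have := mh measurableT _ (measurable_set1 0); rewrite setTI.
congr measurable; apply/seteqP; split=> a /=.
  by move/eqP; rewrite subr_eq0 => /eqP.
by move=> ->; rewrite subrr.
Qed.

Hypothesis hF : has_density_tuple F.

Lemma FGam0 t k : F (Gam t k) = 0%E.
Proof.
case: hF => f [mf [f0 Hf]]; rewrite Hf; last exact: mGam.
apply: LIT0 => t'.
apply: (@int_zero_off _ [set k * Lp t t']).
- exact: measurable_set1.
- exact: lebesgue_measure_set1.
- apply: measurable_realfun.measurable_funM.
    apply: (measurableT_comp (f := \1_(Gam t k) : T -> R)); last exact: measurable_upd_last.
    exact: measurable_realfun.measurable_indic (mGam t k).
  by apply: (measurableT_comp (f := f)); [exact: mf|exact: measurable_upd_last].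
- move=> y Hy; rewrite indicE memNset ?mul0r //.
  rewrite /Gam /= tnth_upd_last eqxx Lp_upd; exact: Hy.
Qed.

Hypothesis n1 : (0 < n)%N.

Definition posfst (t : T) := forall i : 'I_n, 0 < tnth t (widen_ord (leqnSn n) i).

Lemma Lp_pos t a : posfst t -> A a -> 0 < Lp t a.
Proof.
move=> tp Aa; rewrite /Lp (bigD1 (Ordinal n1)) //=.
have h1 : 0 < tnth t (widen_ord (leqnSn n) (Ordinal n1)) *
               tnth a (widen_ord (leqnSn n) (Ordinal n1)).
  by apply: mulr_gt0; [exact: tp|exact: Apos].
have h2 : 0 <= \sum_(i < n | i != Ordinal n1)
    tnth t (widen_ord (leqnSn n) i) * tnth a (widen_ord (leqnSn n) i).
  by apply: sumr_ge0 => i _; apply: ltW; apply: mulr_gt0; [exact: tp|exact: Apos].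
move: h1 h2; move: (tnth t _ * _) (\sum_(_ < _ | _) _) => u v; lra.
Qed.

Lemma inter_null t y y' tau tau' : posfst t -> y != y' ->
  F (E (upd_last t y) tau `&` E (upd_last t y') tau') = 0%E.
Proof.
move=> tp yy.
have yy0 : y - y' != 0 by rewrite subr_eq0.
set c := (tau - tau') / (y - y'); set e := tau - y * c.
apply/eqP; rewrite -measure_le0 -(FGam0 t (c / e)).
apply: le_measure; rewrite ?inE; [|exact: mGam|].
  by apply: measurableI; exact: mE.
move=> a [[Aa /= H1] [_ /= H2]].
rewrite dotv_updL in H1; rewrite dotv_updL in H2; rewrite /Gam /=.
have Lpos := Lp_pos tp Aa; have rp := rpos Aa.
move: (Lp t a) (tnth a ord_max) (r a) H1 H2 Lpos rp => L x rho H1 H2 Lpos rp.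
have hyx : (y - y') * x = (tau - tau') * rho.
  by rewrite [RHS]mulrBl -H1 -H2; ring.
have hx : x = c * rho.
  apply: (mulfI yy0); rewrite hyx /c; field; exact: yy0.
have hL : L = e * rho.
  have -> : L = tau * rho - y * x by rewrite -H1; ring.
  by rewrite hx /e; ring.
have e0 : e != 0.
  by apply/eqP => e0; move: Lpos; rewrite hL e0 mul0r ltxx.
rewrite hx hL; field; exact: e0.
Qed.

Lemma bigU_add (mu : {measure set T -> \bar R}) (S : R -> set T) (s : seq R) :
  uniq s ->
  (forall y, measurable (S y)) -> (forall y, mu (S y) < +oo)%E ->
  (forall y y', y != y' -> mu (S y `&` S y') = 0%E) ->
  mu (\big[setU/set0]_(y <- s) S y) = (\sum_(y <- s) mu (S y))%E.
Proof.
move=> + mS mfin H; elim: s => [|x s IH]; first by rewrite !big_nil measure0.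
rewrite /= => /andP[xs us].
have N0 : mu (S x `&` \big[setU/set0]_(y <- s) S y) = 0%E.
  elim: s xs {IH us} => [|y s IH] xs; first by rewrite big_nil setI0 measure0.
  rewrite big_cons setIUr null_set_setU //.
  - by apply: measurableI.
  - by apply: measurableI => //; apply: bigsetU_measurable.
  - by apply: H; apply: contraNneq xs => ->; rewrite mem_head.
  - by apply: IH; apply: contra xs => xs; rewrite in_cons xs orbT.
rewrite !big_cons measureUfinl //.
- by rewrite (IH us) N0 sube0.
- by apply: bigsetU_measurable.
Qed.

Lemma sum_lb (s : seq R) (f : R -> \bar R) (c : R) :
  (forall y, y \in s -> c%:E <= f y)%E ->
  (((size s)%:R * c)%:E <= \sum_(y <- s) f y)%E.
Proof.
elim: s => [|x s IH] H; first by rewrite big_nil mul0r.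
rewrite big_cons /= mulrS mulrDl mul1r EFinD; apply: leeD.
  by apply: H; rewrite mem_head.
by apply: IH => y ys; apply: H; rewrite in_cons ys orbT.
Qed.

Lemma atoms_finite t k : posfst t ->
  finite_set [set y | exists tau, ((k.+1%:R^-1)%:E < F (E (upd_last t y) tau))%E].
Proof.
move=> tp; apply: contrapT => Hinf.
have [B BP cardB] := infinite_set_fset k.+2 Hinf.
set s := finmap.enum_fset B in cardB.
have Bs y : y \in s -> exists tau, ((k.+1%:R^-1)%:E < F (E (upd_last t y) tau))%E.
  by move=> ys; exact: (BP y ys).
have [tauf Htau] : {f : R -> R & forall y, y \in s ->
    ((k.+1%:R^-1)%:E < F (E (upd_last t y) (f y)))%E}.
  apply: (@choice _ _ (fun y tau => y \in s -> ((k.+1%:R^-1)%:E < F (E (upd_last t y) tau))%E)) => y; have [/Bs [tau H]|nB] := boolP (y \in s).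
    by exists tau.
  by exists 0.
pose S y := E (upd_last t y) (tauf y).
have uB : uniq s by exact: finmap.fset_uniq.
have Hsum : F (\big[setU/set0]_(y <- s) S y) = (\sum_(y <- s) F (S y))%E.
  apply: bigU_add => //.
  - by move=> y; exact: mE.
  - by move=> y; apply: (le_lt_trans (probability_le1 _ _)); [exact: mE|exact: ltry].
  - by move=> y y' yy; apply: inter_null.
have H1 : (F (\big[setU/set0]_(y <- s) S y) <= 1)%E.
  by apply: probability_le1; apply: bigsetU_measurable => y _; exact: mE.
have H2 : (((size s)%:R * k.+1%:R^-1)%:E <= \sum_(y <- s) F (S y))%E.
  by apply: sum_lb => y ys; apply: ltW; exact: Htau.
have : ((size s)%:R * k.+1%:R^-1 <= (1 : R)).
  by rewrite -lee_fin; apply: (le_trans H2); rewrite -Hsum.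
rewrite ler_pdivrMr ?ltr0Sn // mul1r ler_nat.
by rewrite leqNgt cardB.
Qed.

Definition posall (w : T) := forall i, 0 < tnth w i.

Lemma mposall : measurable [set w : T | posall w].
Proof.
have -> : [set w : T | posall w] = \bigcap_(i in [set: 'I_n.+1]) [set w : T | 0 < tnth w i].
  apply/seteqP; split=> w /= H i; first by move=> _; exact: H.
  exact: H.
apply: fin_bigcap_measurable; first exact: finite_finset.
move=> i _; have := @measurable_tnth _ R n.+1 i measurableT _ (measurable_itv (R := R) `]0, +oo[).
congr measurable; apply/seteqP; split=> w /=.
  by move=> [_]; rewrite in_itv /= andbT.
by move=> H; split => //; rewrite in_itv /= andbT.
Qed.

Definition DD : set (T * (T * T)) :=
  [set z | A z.2.1 /\ A z.2.2 /\ dotv z.1 z.2.1 * r z.2.2 = dotv z.1 z.2.2 * r z.2.1].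

Lemma mDD : measurable DD.
Proof.
pose D0 : set (T * (T * T)) := setT `*` (A `*` A).
have mD0 : measurable D0 by apply: measurableX => //; apply: measurableX.
have ms1 : measurable_fun setT (fun z : T * (T * T) => z.2.1).
  exact: measurableT_comp measurable_fst measurable_snd.
have ms2 : measurable_fun setT (fun z : T * (T * T) => z.2.2).
  exact: measurableT_comp measurable_snd measurable_snd.
have md1 : measurable_fun D0 (fun z : T * (T * T) => dotv z.1 z.2.1).
  apply: (measurable_funS measurableT) => //.
  exact: measurable_dotv measurable_fst ms1.
have md2 : measurable_fun D0 (fun z : T * (T * T) => dotv z.1 z.2.2).
  apply: (measurable_funS measurableT) => //.
  exact: measurable_dotv measurable_fst ms2.
have mr1 : measurable_fun D0 (fun z : T * (T * T) => r z.2.1).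
  apply: (measurable_comp mA _ mr (measurable_funS measurableT _ ms1)) => //.
  by move=> _ [z [_ [Az _]] <-].
have mr2 : measurable_fun D0 (fun z : T * (T * T) => r z.2.2).
  apply: (measurable_comp mA _ mr (measurable_funS measurableT _ ms2)) => //.
  by move=> _ [z [_ [_ Az]] <-].
have mh : measurable_fun D0 (fun z => dotv z.1 z.2.1 * r z.2.2 - dotv z.1 z.2.2 * r z.2.1).
  by apply: measurable_realfun.measurable_funB;
    apply: measurable_realfun.measurable_funM.
have := mh mD0 _ (measurable_set1 0).
congr measurable; apply/seteqP; split.
  move=> z [[_ [Az1 Az2]] /= H]; split => //; split => //.
  by apply/eqP; rewrite -subr_eq0; apply/eqP.
move=> z [Az1 [Az2 H]]; split => //=; last by rewrite H subrr.
Qed.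

Definition PP := product_subprobability (F : subprobability _ R, F : subprobability _ R).

Definition Phi (w : T) : \bar R := PP (xsection DD w).

Lemma mPhi : measurable_fun setT Phi.
Proof. exact: (@measurable_fun_xsection _ _ _ _ _ PP DD mDD). Qed.

Lemma Phi_ge w tau : (F (E w tau) * F (E w tau) <= Phi w)%E.
Proof.
have h := @product_measure1E _ _ _ _ _ F (F : {sigma_finite_measure set T -> \bar R})
  _ _ (mE w tau) (mE w tau).
have -> : (F (E w tau) * F (E w tau))%E = PP (E w tau `*` E w tau) by rewrite -h.
apply: le_measure; rewrite ?inE.
- by apply: measurableX; exact: mE.
- exact: measurable_xsection mDD.
move=> [a b] [[Aa /= Ha] [Ab /= Hb]]; apply/xsectionP; split => //; split => //=.
by rewrite Ha Hb mulrAC.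
Qed.

Lemma Phi_pos_atom w : (0 < Phi w)%E -> exists tau, (0 < F (E w tau))%E.
Proof.
move=> Hp; apply: contrapT => Hn.
have H0 tau : F (E w tau) = 0%E.
  apply/eqP; rewrite eq_le measure_ge0 andbT leNgt; apply/negP => H.
  by apply: Hn; exists tau.
move: Hp; rewrite /Phi /PP /= /product_measure1 integral0_eq ?ltxx // => a _ /=.
have mX : measurable (xsection (xsection DD w) a).
  by apply: measurable_xsection; apply: measurable_xsection; exact: mDD.
have [Aa|nAa] := pselect (A a); last first.
  rewrite (_ : xsection _ _ = set0) ?measure0 //.
  by apply/seteqP; split=> // b /xsectionP /xsectionP [].
apply/eqP; rewrite eq_le measure_ge0 andbT -(H0 (dotv w a / r a)).
apply: le_measure; rewrite ?inE //; first exact: mE.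
move=> b /xsectionP /xsectionP [_ [Ab /= Hb]]; split => //=.
have ra := rpos Aa; apply: (mulIf (lt0r_neq0 ra)); rewrite -Hb; field; exact: lt0r_neq0.
Qed.

Definition N2 : set T := [set w | posall w /\ (0 < Phi w)%E].

Lemma mN2 : measurable N2.
Proof.
have := mPhi measurableT (emeasurable_itv `]0%E, +oo[).
have := mposall; move=> mp mq; have := measurableI _ _ mp mq.
congr measurable; apply/seteqP; split=> w /=.
  by move=> [pw [_ /=]]; rewrite in_itv /= andbT => Hp; split.
by move=> [pw Hp]; split => //; split => //=; rewrite in_itv /= andbT.
Qed.

Lemma atom_N2 w tau : posall w -> (0 < F (E w tau))%E -> N2 w.
Proof.
move=> pw H; split => //; apply: (lt_le_trans _ (Phi_ge w tau)).
exact: mule_gt0.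
Qed.

Lemma section_countable t : countable [set y | N2 (upd_last t y)].
Proof.
have [[y0 [p0 _]]|empty] := pselect (exists y, N2 (upd_last t y)); last first.
  rewrite (_ : [set y | _] = set0); first exact: countable0.
  by apply/seteqP; split => // y Hy; apply: empty; exists y.
have tp : posfst t.
  move=> i; have := p0 (widen_ord (leqnSn n) i); rewrite tnth_upd_last.
  by have -> // : (widen_ord (leqnSn n) i == ord_max) = false;
    rewrite -(inj_eq val_inj) /= ltn_eqF.
apply: (@sub_countable _ _ _ (\bigcup_(k in [set: nat])
   [set y | exists tau, ((k.+1%:R^-1)%:E < F (E (upd_last t y) tau))%E])).
  apply: subset_card_le => y [_ /Phi_pos_atom [tau Htau]].
  have fin : F (E (upd_last t y) tau) \is a fin_num by apply: fin_num_measure; exact: mE.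
  move: Htau; rewrite -(fineK fin) lte_fin => Hx.
  have [k Hk] := archi_inv Hx.
  by exists k => //; exists tau; rewrite -(fineK fin) lte_fin.
apply: bigcup_countable; first exact: countableP.
move=> k _; apply: finite_set_countable; exact: atoms_finite.
Qed.

Lemma mC t : measurable [set y : R | N2 (upd_last t y)].
Proof.
have := measurable_upd_last t measurableT mN2; rewrite setTI.
by congr measurable.
Qed.

Lemma G_null (G : probability (T * R)%type R) : has_density_pair G ->
  G (N2 `*` setT) = 0%E.
Proof.
case=> g [mg [g0 Hg]]; rewrite Hg; last by apply: measurableX; [exact: mN2|].
rewrite integral0_eq // => b _.
apply: LIT0 => t.
apply: (@int_zero_off _ [set y | N2 (upd_last t y)]).
- exact: mC.
- exact: countable_lebesgue_measure0 (section_countable t).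
- have mp : measurable_fun setT (fun y => (upd_last t y, b)).
    by apply: measurable_fun_pair; [exact: measurable_upd_last|exact: measurable_cst].
  apply: measurable_realfun.measurable_funM.
    apply: (measurableT_comp (f := \1_(N2 `*` setT) : T * R -> R)) => //.
    apply: measurable_realfun.measurable_indic.
    by apply: measurableX; [exact: mN2|].
  by apply: (measurableT_comp (f := g)).
- move=> y Hy; rewrite indicE memNset ?mul0r //.
  by move=> [].
Qed.
End Main.

Lemma main_aux (R : realType) (n : nat) (U Bmin : R)
  (A : set (n.+1.-tuple R)) (F : probability (n.+1.-tuple R) R)
  (G : probability (n.+1.-tuple R * R)%type R) (r : n.+1.-tuple R -> R) :
  (0 < n)%N ->
  measurable A -> (forall a, A a -> forall i, 0 < tnth a i) ->
  has_density_tuple F ->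
  measurable (Theta (d:=n.+1) U Bmin) -> G (Theta U Bmin) = 1%E -> has_density_pair G ->
  measurable_fun A r -> (forall a, A a -> 0 < r a) ->
  {ae pushforward G fst, forall w, continuous (Kw_cdf F A r w)} /\
  exists S, measurable S /\ S `<=` Theta' U Bmin F A r /\ G S = 1%E.
Proof.
move=> n1 mA Apos hF mTh GTh hG mr rpos.
pose N := ~` [set w | posall w] `|` N2 A F r.
have mN : measurable N.
  by apply: measurableU; [apply: measurableC; exact: mposall|exact: mN2].
have contN w : ~ N w -> continuous (Kw_cdf F A r w).
  move=> Nw; apply: (cont_noatom mA mr rpos) => tau.
  have pw : posall w by apply: contrapT => pw; apply: Nw; left.
  apply/eqP; rewrite eq_le measure_ge0 andbT leNgt; apply/negP => H.
  by apply: Nw; right; exact: (atom_N2 mA mr pw H).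
have GC : G (~` Theta U Bmin) = 0%E.
  by rewrite probability_setC // GTh subee.
have GN : G (fst @^-1` N) = 0%E.
  have -> : fst @^-1` N = (~` [set w | posall w]) `*` setT `|` N2 A F r `*` setT :> set (n.+1.-tuple R * R).
    apply/seteqP; split=> -[w b] /=; first by case=> H; [left|right].
    by case=> -[H _]; [left|right].
  apply/eqP; rewrite eq_le measure_ge0 andbT.
  apply: (le_trans (measureU2 _ _ _)).
  - by apply: measurableX => //; apply: measurableC; exact: mposall.
  - by apply: measurableX => //; exact: mN2.
  have h1 := G_null mA Apos mr rpos hF n1 hG.
  have h2 : (G (~` [set w | posall w] `*` setT) <= 0)%E.
    rewrite -GC; apply: le_measure; rewrite ?inE.
    - by apply: measurableX => //; apply: measurableC; exact: mposall.
    - exact: measurableC.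
    move=> [w b] [/= pw _] [Hw _]; apply: pw => i.
    by have /andP[] := Hw i.
  have h3 : (G (N2 A F r `*` setT) <= 0)%E by rewrite h1.
  by rewrite -[leRHS]adde0; apply: leeD.
split.
  exists N; split => //.
  by move=> w /= Hw; apply: contrapT => Nw; apply: Hw; exact: contN.
exists (Theta U Bmin `&` fst @^-1` (~` N)); split; [|split].
- apply: measurableI => //; rewrite -[X in measurable X]setTI.
  by apply: measurable_fst => //; exact: measurableC.
- by move=> [w b] [Th /= Nw]; split => //; exact: contN.
- apply/eqP; rewrite eq_le; apply/andP; split.
    by apply: probability_le1; apply: measurableI => //; rewrite -[X in measurable X]setTI;
      apply: measurable_fst => //; exact: measurableC.
  rewrite -GTh.
  have mF : measurable (fst @^-1` N : set (n.+1.-tuple R * R)).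
    by rewrite -[X in measurable X]setTI; exact: measurable_fst.
  have mS : measurable (Theta U Bmin `&` fst @^-1` (~` N)).
    apply: measurableI => //; rewrite -[X in measurable X]setTI.
    by apply: measurable_fst => //; exact: measurableC.
  have hT : (G (Theta U Bmin) <=
      G (Theta U Bmin `&` fst @^-1` (~` N) `|` fst @^-1` N))%E.
    apply: le_measure; rewrite ?inE //; first exact: measurableU.
    move=> p Th; have [Np|Np] := pselect (N p.1); first by right.
    by left.
  apply: (le_trans hT); apply: (le_trans (measureU2 _ mS mF)).
  have h3 : (G (fst @^-1` N) <= 0)%E by rewrite GN.
  by rewrite -[leRHS]adde0; apply: leeD.
Qed.

Unset Implicit Arguments.
Set Strict Implicit.

Theorem mainTheorem12 (R : realType) (d : nat) (U Bmin : R)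
  (A : set (d.-tuple R)) (F : probability (d.-tuple R) R)
  (G : probability (d.-tuple R * R)%type R) (r : d.-tuple R -> R) :
  (2 <= d)%N -> 0 < U -> 0 < Bmin ->
  measurable A -> (forall a, A a -> forall i, 0 < tnth a i) ->
  F A = 1%E -> has_density_tuple F ->
  measurable (Theta (d:=d) U Bmin) -> G (Theta U Bmin) = 1%E -> has_density_pair G ->
  measurable_fun A r -> (forall a, A a -> 0 < r a) ->
  {ae pushforward G fst, forall w, continuous (Kw_cdf F A r w)} /\
  exists S, measurable S /\ S `<=` Theta' U Bmin F A r /\ G S = 1%E.
Proof.
case: d A F G r => [|[|m]] // A F G r d2 U0 B0 mA Apos FA hF mTh GTh hG mr rpos.
exact: (@main_aux R m.+1 U Bmin A F G r (ltn0Sn m) mA Apos hF mTh GTh hG mr rpos).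
Qed.
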